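(* Fix $y\in\mathcal Y$, $g\in\mathcal G$ and $x\in\mathcal X$. Restrict attention to the individuals $i\in\mathcal I(xg)$, and assume the matrix $\hat{\mathbf P}=(\hat P_{ir})_{i\in\mathcal I(xg),r\in\mathcal R}$ has full column rank $|\mathcal R|$. Then the following two statements are equivalent. 1. The within-cell weighting estimator and the within-cell OLS estimator coincide: $\hat\mu^{(\mathrm{wtd})}(y\mid r)=\hat\mu^{(\mathrm{ols})}(y\mid r)$ for all $r\in\mathcal R$. 2. For every pair of distinct $j,k\in\mathcal R$, at least one of the following holds: - the probabilities perfectly discriminate between $j$ and $k$, i.e. for every $i\in\mathcal I(xg)$, $\hat P_{ij}>0$ implies $\hat P_{ik}=0$ (equivalently $\sum_{i\in\mathcal I(xg)}\hat P_{ij}\hat P_{ik}=0$); - $\hat\mu^{(\mathrm{wtd})}(y\mid j)=\hat\mu^{(\mathrm{wtd})}(y\mid k)$.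
   Context: There are observations $i$ with outcomes $Y_i\in\mathcal Y$ (a finite set), locations $G_i\in\mathcal G$ and covariates $X_i\in\mathcal X$. Each individual has a vector of race probabilities $(\hat P_{ir})_{r\in\mathcal R}$ (e.g., BISG probabilities) with $\hat P_{ir}\ge0$ and $\sum_{r}\hat P_{ir}=1$. Let $\mathcal I(xg)=\{i:X_i=x,G_i=g\}$ and let $\mathbf 1_y$ be the vector $(\mathbb 1\{Y_i=y\})_{i\in\mathcal I(xg)}$. Within the cell, the weighting estimator is $$\hat\mu^{(\mathrm{wtd})}(y\mid r)=\frac{\sum_{i\in\mathcal I(xg)}\mathbb 1\{Y_i=y\}\hat P_{ir}}{\sum_{i\in\mathcal I(xg)}\hat P_{ir}},$$ and the OLS estimator is the vector $$\hat{\boldsymbol\mu}^{(\mathrm{ols})}(y\mid\cdot)=(\hat{\mathbf P}^\top\hat{\mathbf P})^{-1}\hat{\mathbf P}^\top\mathbf 1_y\in\mathbb R^{\mathcal R}.$$ *)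

(* Defs.v *)
From mathcomp Require Import all_boot all_order all_algebra.
Set Implicit Arguments. Unset Strict Implicit. Unset Printing Implicit Defensive.
Import Order.TTheory GRing.Theory Num.Theory.
Local Open Scope ring_scope.

(* Population of individuals [I] (finite), races ['I_m], outcomes/locations/
   covariates in arbitrary eqTypes.  [P i r] is the race probability. *)

Definition cell (I : finType) (Gt Xt : eqType) (G : I -> Gt) (X : I -> Xt)
  (x : Xt) (g : Gt) : {set I} := [set i | (X i == x) && (G i == g)].

Definition Pcell (F : realFieldType) (I : finType) (Gt Xt : eqType)
  (G : I -> Gt) (X : I -> Xt) (x : Xt) (g : Gt) (m : nat)
  (P : I -> 'I_m -> F) : 'M[F]_(#|cell G X x g|, m) :=
  \matrix_(a < #|cell G X x g|, r < m) P (enum_val a) r.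

Definition onecell (F : realFieldType) (I : finType) (Yt Gt Xt : eqType)
  (Y : I -> Yt) (G : I -> Gt) (X : I -> Xt) (x : Xt) (g : Gt) (y : Yt)
  : 'cV[F]_(#|cell G X x g|) :=
  \col_(a < #|cell G X x g|) ((Y (enum_val a) == y)%:R).

Definition mu_wtd (F : realFieldType) (I : finType) (Yt Gt Xt : eqType)
  (Y : I -> Yt) (G : I -> Gt) (X : I -> Xt) (m : nat) (P : I -> 'I_m -> F)
  (x : Xt) (g : Gt) (y : Yt) (r : 'I_m) : F :=
  (\sum_(i in cell G X x g) (Y i == y)%:R * P i r) /
  (\sum_(i in cell G X x g) P i r).

Definition mu_ols (F : realFieldType) (I : finType) (Yt Gt Xt : eqType)
  (Y : I -> Yt) (G : I -> Gt) (X : I -> Xt) (m : nat) (P : I -> 'I_m -> F)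
  (x : Xt) (g : Gt) (y : Yt) : 'cV[F]_m :=
  let Ph := Pcell G X x g P in
  invmx (Ph^T *m Ph) *m Ph^T *m onecell F Y G X x g y.

(* Main.v *)
Require Import Defs.
From mathcomp Require Import all_boot all_order all_algebra.
From mathcomp Require Import ring.
Import Order.TTheory GRing.Theory Num.Theory.
Local Open Scope ring_scope.

Lemma Aunit (F : realFieldType) n m (M : 'M[F]_(n,m)) :
  \rank M = m -> M^T *m M \in unitmx.
Proof.
move=> hr; rewrite -row_free_unit; apply: inj_row_free => v hv.
have hfree : row_free M^T by rewrite /row_free mxrank_tr hr.
apply/eqP; rewrite -(mulmx_free_eq0 _ hfree); set u := v *m M^T.
have hu : u *m u^T = 0.
  by rewrite /u trmx_mul trmxK mulmxA -(mulmxA v) hv mul0mx.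
apply/eqP/matrixP => i a; rewrite (ord1 i) mxE.
move/matrixP: hu => /(_ 0 0); rewrite !mxE => hs.
have hn : forall k, predT k -> 0 <= u 0 k * u^T k 0.
  by move=> k _; rewrite [u^T k 0]mxE -expr2 sqr_ge0.
have := psumr_eq0P hn hs (i:=a) isT.
rewrite [u^T _ _]mxE => /eqP; rewrite mulf_eq0 orbb => /eqP.
move=> H; apply: (etrans _ H); by rewrite /u [in RHS]mxE.
Qed.

Lemma colsum_neq0 (F : realFieldType) n m (M : 'M[F]_(n,m)) :
  (forall a r, 0 <= M a r) -> \rank M = m -> forall r, \sum_a M a r != 0.
Proof.
move=> h0 hr r; apply/negP => /eqP hs.
have hz := psumr_eq0P (P := predT) (F := fun a => M a r) (fun a _ => h0 a r) hs.
have hfree : row_free M^T by rewrite /row_free mxrank_tr hr.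
have : (delta_mx 0 r : 'rV_m) *m M^T == 0.
  rewrite -rowE; apply/eqP/matrixP => i a; rewrite !mxE; exact: hz.
rewrite (mulmx_free_eq0 _ hfree) => /eqP /matrixP /(_ 0 r).
by rewrite !mxE !eqxx /= => /eqP; rewrite oner_eq0.
Qed.

Lemma core (F : realFieldType) n m (M : 'M[F]_(n,m)) (o : 'cV[F]_n)
  (h0 : forall a r, 0 <= M a r) (h1 : forall a, \sum_r M a r = 1)
  (hr : \rank M = m) :
  let w r := (\sum_a o a 0 * M a r) / (\sum_a M a r) in
  (forall r, w r = (invmx (M^T *m M) *m M^T *m o) r 0) <->
  (forall j k, j != k -> (\sum_a M a j * M a k = 0) \/ w j = w k).
Proof.
move=> w; set A := M^T *m M.
have hU : A \in unitmx := @Aunit F n m M hr.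
have hs := @colsum_neq0 F n m M h0 hr.
have hA : forall r k, A r k = \sum_a M a r * M a k.
  by move=> r k; rewrite !mxE; apply eq_bigr => a _; rewrite mxE.
have hA0 : forall r k, 0 <= A r k.
  by move=> r k; rewrite hA; apply: sumr_ge0 => a _; apply: mulr_ge0.
have hsym : forall r k, A r k = A k r.
  by move=> r k; rewrite !hA; apply eq_bigr => a _; rewrite mulrC.
have hsA : forall r, \sum_a M a r = \sum_k A r k.
  move=> r; rewrite (eq_bigr _ (fun k _ => hA r k)).
  rewrite exchange_big /=; apply eq_bigr => a _.
  by rewrite -mulr_sumr h1 mulr1.
have hb : forall r, (M^T *m o) r 0 = w r * \sum_a M a r.
  move=> r; rewrite /w divfK // mxE; apply eq_bigr => a _.
  by rewrite mxE mulrC.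
set W := \col_r w r.
have hAW : forall r, (A *m W) r 0 = \sum_k A r k * w k.
  by move=> r; rewrite mxE; apply eq_bigr => k _; rewrite [W k 0]mxE.
have hD : forall r, \sum_k A r k * (w k - w r) = (A *m W) r 0 - (M^T *m o) r 0.
  move=> r; rewrite hAW hb hsA mulr_sumr -sumrB; apply eq_bigr => k _.
  by rewrite mulrBr [w r * _]mulrC.
have step1 : (forall r, w r = (invmx A *m M^T *m o) r 0) <-> A *m W = M^T *m o.
  split.
  - move=> H; have -> : W = invmx A *m M^T *m o.
      by apply/matrixP => r c; rewrite (ord1 c) mxE H.
    by rewrite -mulmxA mulKVmx.
  - by move=> H r; rewrite -mulmxA -H mulKmx // mxE.
have step2 : A *m W = M^T *m o <-> forall r, \sum_k A r k * (w k - w r) = 0.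
  split => [H r|H]; first by rewrite hD H subrr.
  apply/matrixP => r c; rewrite (ord1 c); apply/eqP; rewrite -subr_eq0 -hD H.
  done.
apply: (iff_trans step1); apply: (iff_trans step2).
split.
- move=> H j k hjk.
  have hU1 : \sum_r \sum_k A r k * w r * (w k - w r) = 0.
    rewrite big1 // => r _.
    rewrite (eq_bigr (fun k' => w r * (A r k' * (w k' - w r)))); last by move=> k' _; ring.
    by rewrite -mulr_sumr H mulr0.
  have hU2 : \sum_r \sum_k A r k * w k * (w r - w k) = 0.
    rewrite exchange_big /=; apply: (etrans _ hU1); apply eq_bigr => r _; apply eq_bigr => k' _.
    by rewrite hsym.
  have hT : \sum_r \sum_k A r k * (w k - w r) ^+ 2 = 0.
    have -> : \sum_r \sum_k A r k * (w k - w r) ^+ 2 =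
       - (\sum_r \sum_k A r k * w r * (w k - w r) +
          \sum_r \sum_k A r k * w k * (w r - w k)).
      rewrite -big_split -sumrN; apply eq_bigr => r _.
      rewrite -big_split -sumrN; apply eq_bigr => k' _ /=; ring.
    by rewrite hU1 hU2 addr0 oppr0.
  have hin : forall r, \sum_k A r k * (w k - w r) ^+ 2 = 0.
    move=> r; have hn : forall r', predT r' -> 0 <= \sum_k A r' k * (w k - w r') ^+ 2.
      by move=> r' _; apply: sumr_ge0 => k' _; apply: mulr_ge0 => //; apply: sqr_ge0.
    exact: (psumr_eq0P hn hT (i:=r) isT).
  have hn : forall k', predT k' -> 0 <= A j k' * (w k' - w j) ^+ 2.
    by move=> k' _; apply: mulr_ge0 => //; apply: sqr_ge0.
  have /eqP := psumr_eq0P hn (hin j) (i:=k) isT.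
  rewrite mulf_eq0 => /orP [/eqP hz|]; first by left; rewrite -hA.
  by rewrite sqrf_eq0 subr_eq0 => /eqP ->; right.
- move=> H r; rewrite big1 // => k _.
  case: (eqVneq k r) => [->|hkr]; first by rewrite subrr mulr0.
  have hrk : r != k by rewrite eq_sym.
  case: (H r k hrk) => [h|h]; first by rewrite hA h mul0r.
  by rewrite h subrr mulr0.
Qed.

Theorem theorem4 (F : realFieldType) (I : finType) (Yt Gt Xt : eqType)
  (Y : I -> Yt) (G : I -> Gt) (X : I -> Xt) (m : nat) (P : I -> 'I_m -> F)
  (hP0 : forall i r, 0 <= P i r)
  (hP1 : forall i, \sum_(r < m) P i r = 1)
  (y : Yt) (g : Gt) (x : Xt)
  (hrank : \rank (Pcell G X x g P) = m) :
  (forall r : 'I_m, mu_wtd Y G X P x g y r = mu_ols Y G X P x g y r ord0)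
  <->
  (forall j k : 'I_m, j != k ->
     (forall i, i \in cell G X x g -> 0 < P i j -> P i k = 0)
     \/ mu_wtd Y G X P x g y j = mu_wtd Y G X P x g y k).
Proof.
set M := Pcell G X x g P; set o := onecell F Y G X x g y.
have h0 : forall a r, 0 <= M a r by move=> a r; rewrite mxE.
have h1 : forall a, \sum_r M a r = 1.
  by move=> a; rewrite -(hP1 (enum_val a)); apply eq_bigr => r _; rewrite mxE.
have C := @core F #|cell G X x g| m M o h0 h1 hrank.
have hw : forall r, mu_wtd Y G X P x g y r =
   (\sum_a o a 0 * M a r) / (\sum_a M a r).
  move=> r; rewrite /mu_wtd !(big_enum_val (A := mem (cell G X x g))).
  rewrite (eq_bigr (fun a => o a 0 * M a r)); last by move=> a _; rewrite /o /M !mxE.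
  rewrite [X in _ / X = _](eq_bigr (fun a => M a r)) //.
  by move=> a _; rewrite /M mxE.
have hdisc : forall j k, (forall i, i \in cell G X x g -> 0 < P i j -> P i k = 0)
    <-> \sum_a M a j * M a k = 0.
  move=> j k; split.
  - move=> H; rewrite big1 // => a _; rewrite !mxE.
    have hi := enum_valP a.
    have := hP0 (enum_val a) j; rewrite le0r => /orP [/eqP ->|hp].
      by rewrite mul0r.
    by rewrite (H _ hi hp) mulr0.
  - move=> H i hi hp.
    have hn : forall a, predT a -> 0 <= M a j * M a k.
      by move=> a _; apply: mulr_ge0.
    have := psumr_eq0P hn H (i := enum_rank_in hi i) isT.
    rewrite !mxE (enum_rankK_in hi hi) => /eqP; rewrite mulf_eq0 gt_eqF //=.
    by move/eqP.
rewrite /mu_ols -/M -/o.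
split.
- move=> H j k hjk; rewrite !hw hdisc.
  apply: (proj1 C) hjk => r; rewrite -hw; exact: H.
- move=> H r; rewrite hw; move: r; apply: (proj2 C) => j k hjk.
  by rewrite -hdisc -!hw; apply: H.
Qed.
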